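(* Let $f=a_1+2a_2+4a_3+8a_4\in\mathcal{GB}_n^{16}$ with $a_1,\dots,a_4\in\mathcal{B}_n$. If $f$ is gbent, then its Gray image $\psi(f)(\mathbf{x},y_1,y_2,y_3)=y_1a_1(\mathbf{x})\oplus y_2a_2(\mathbf{x})\oplus y_3a_3(\mathbf{x})\oplus a_4(\mathbf{x})\in\mathcal{B}_{n+3}$ is semibent if $n$ is odd, and $3$-plateaued if $n$ is even.
   Context: $\mathcal{B}_m$: Boolean functions $\mathbb{F}_2^m\to\mathbb{F}_2$; $\mathcal{GB}_n^q$: functions $\mathbb{F}_2^n\to\mathbb{Z}_q$ (Boolean values viewed as integers, sum in $\mathbb{Z}_{16}$). $\mathcal{H}^{(q)}_f(\mathbf{u})=\sum_{\mathbf{x}}\zeta_q^{f(\mathbf{x})}(-1)^{\mathbf{u}\cdot\mathbf{x}}$ with $\zeta_q=e^{2\pi i/q}$; $f$ is gbent if $|\mathcal{H}^{(q)}_f(\mathbf{u})|=2^{n/2}$ for all $\mathbf{u}$. $\mathcal{W}_g(\mathbf{w})=\sum_{\mathbf{z}}(-1)^{g(\mathbf{z})+\mathbf{w}\cdot\mathbf{z}}$. A Boolean function $g$ on $\mathbb{F}_2^m$ is $s$-plateaued if $|\mathcal{W}_g(\mathbf{w})|\in\{0,2^{(m+s)/2}\}$ for all $\mathbf{w}$; it is semibent if it is $1$-plateaued ($m$ odd) or $2$-plateaued ($m$ even). *)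

(* Defs.v *)
From HB Require Import structures.
From mathcomp Require Import all_boot all_order all_algebra all_field.
Set Implicit Arguments. Unset Strict Implicit. Unset Printing Implicit Defensive.
Import Order.TTheory GRing.Theory Num.Theory.
Local Open Scope ring_scope.

Definition bvec (n : nat) := {ffun 'I_n -> bool}.

Definition dotb n (u x : bvec n) : bool := \big[addb/false]_(i < n) (u i && x i).

Definition sgnC (b : bool) : algC := (-1) ^+ b.

(* zeta_16 = e^{2 pi i/16}: 8.-root (-1) is the 8th root of -1 with minimal
   nonnegative argument, i.e. e^{i pi/8}. *)
Definition zeta16 : algC := 8.-root (-1).

(* Generalized Walsh–Hadamard transform H^{(16)}_f(u), f : F_2^n -> Z_16
   (values represented by naturals, exponent taken of zeta16). *)
Definition gwalsh16 n (f : bvec n -> nat) (u : bvec n) : algC :=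
  \sum_(x : bvec n) zeta16 ^+ (f x) * sgnC (dotb u x).

Definition gbent16 n (f : bvec n -> nat) : Prop :=
  forall u : bvec n, `|gwalsh16 f u| = sqrtC (2%:R ^+ n).

Definition walsh m (g : bvec m -> bool) (w : bvec m) : algC :=
  \sum_(z : bvec m) sgnC (g z (+) dotb w z).

Definition plateaued m (s : nat) (g : bvec m -> bool) : Prop :=
  forall w : bvec m,
    `|walsh g w| = 0 \/ `|walsh g w| = sqrtC (2%:R ^+ (m + s)).

Definition semibent m (g : bvec m -> bool) : Prop :=
  if odd m then plateaued 1 g else plateaued 2 g.

Definition f16 n (a1 a2 a3 a4 : bvec n -> bool) (x : bvec n) : nat :=
  (a1 x + 2 * a2 x + 4 * a3 x + 8 * a4 x)%N.

(* Gray image psi(f)(x,y1,y2,y3) on F_2^(n+3): the first n coordinates are x,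
   the last three are y1,y2,y3. *)
Definition ord3_0 : 'I_3 := @Ordinal 3 0 isT.
Definition ord3_1 : 'I_3 := @Ordinal 3 1 isT.
Definition ord3_2 : 'I_3 := @Ordinal 3 2 isT.

Definition xpart n (z : bvec (n + 3)) : bvec n := [ffun i => z (lshift 3 i)].
Definition ypart n (z : bvec (n + 3)) (j : 'I_3) : bool := z (rshift n j).

Definition gray n (a1 a2 a3 a4 : bvec n -> bool) (z : bvec (n + 3)) : bool :=
  let x := xpart z in
  (ypart z ord3_0 && a1 x) (+) (ypart z ord3_1 && a2 x)
    (+) (ypart z ord3_2 && a3 x) (+) a4 x.

(* Main.v *)
Require Import Defs.
From mathcomp Require Import all_boot all_order all_algebra all_field.
From mathcomp Require Import zify ring lra.
Import Order.TTheory GRing.Theory Num.Theory.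
Local Open Scope ring_scope.

Definition sgc (c : nat -> int) (j k : nat) : int :=
  if (j < k)%N then c j * c k else - (c j * c k).

Definition negcorr (c : nat -> int) (e : nat) : int :=
  \sum_(0 <= j < 8) sgc c j ((j + 8 - e) %% 8).

Definition negcorr64 (c : nat -> int) (e : nat) : int :=
  \sum_(0 <= j < 8) \sum_(0 <= k < 8)
     (if ((j + 8 - k) %% 8 == e)%N then sgc c j k else 0).

Lemma negcorr64E c e : (e < 8)%N -> negcorr64 c e = negcorr c e.
Proof.
move=> he; apply: eq_big_nat => j /andP[_ hj].
rewrite (bigD1_seq ((j + 8 - e) %% 8)%N) /=; last by [].
2: by rewrite mem_index_iota /= ltn_mod.
rewrite big1_seq ?addr0.
  have -> : ((j + 8 - (j + 8 - e) %% 8) %% 8 == e)%N by apply/eqP; lia.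
  by [].
move=> k /andP[hk]; rewrite mem_index_iota /= => hk8.
case: ifP => // /eqP he'; exfalso; move/eqP: hk; apply; lia.
Qed.

Lemma negcorr0 c : negcorr c 0 = - \sum_(0 <= j < 8) c j ^+ 2.
Proof.
rewrite /negcorr -sumrN; apply: eq_big_nat => j /andP[_ hj].
have -> : ((j + 8 - 0) %% 8 = j)%N by lia.
by rewrite /sgc ltnn expr2.
Qed.

Lemma negcorr_scale (c : nat -> int) e :
  negcorr (fun j => 2 * c j) e = 4 * negcorr c e.
Proof.
rewrite /negcorr mulr_sumr; apply: eq_bigr => j _.
rewrite /sgc; case: ifP => _; rewrite ?mulrN ?mulrA; ring.
Qed.

Fixpoint lists (n : nat) : seq (seq int) :=
  if n is n'.+1 then [seq x :: t | x <- [:: 0; 1; 2; 3], t <- lists n'] else [:: [::]].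
Definition cond (l : seq int) : bool :=
  ~~ all (fun e => (negcorr (fun j => nth 0 l j) e %% 4 == 0)%Z) (iota 0 8)
  || all (fun j => (nth 0 l j %% 2 == 0)%Z) (iota 0 8).
Lemma check : all cond (lists 8).
Proof. rewrite /cond /negcorr /sgc !unlock. vm_compute. reflexivity. Qed.

Lemma lists_mem l : all (fun x => x \in [:: 0; 1; 2; 3]) l -> l \in lists (size l).
Proof.
elim: l => [|x l IH]; first by [].
move=> /andP[hx hl].
change (x :: l \in [seq y :: t | y <- [:: 0; 1; 2; 3], t <- lists (size l)]).
by apply/allpairsPdep; exists x, l; split => //; apply: IH.
Qed.

Lemma negcorr_ext c d e : (forall j, (j < 8)%N -> c j = d j) -> negcorr c e = negcorr d e.
Proof.
move=> h; apply: eq_big_nat => j /andP[_ hj].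
by rewrite /sgc !h // ltn_mod.
Qed.

Lemma negcorr_mod4 c d e : (forall j, (4 %| c j - d j)%Z) -> (4 %| negcorr c e - negcorr d e)%Z.
Proof.
move=> h; rewrite /negcorr -sumrB; apply: rpred_sum => j _.
set k := ((j + 8 - e) %% 8)%N.
have E : c j * c k - d j * d k = (c j - d j) * c k + d j * (c k - d k) by ring.
have E' : - (c j * c k) - - (d j * d k) = - ((c j - d j) * c k + d j * (c k - d k)) by ring.
rewrite /sgc; case: ifP => _; rewrite ?E' ?E ?rpredN;
  by apply: rpredD; [apply: dvdz_mulr | apply: dvdz_mull].
Qed.

Lemma even_of_4 (c : nat -> int) :
  (forall e, (e < 8)%N -> (4 %| negcorr c e)%Z) -> forall j, (j < 8)%N -> (2 %| c j)%Z.
Proof.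
move=> hc j hj.
pose r j := (c j %% 4)%Z.
have hcr : forall j, (4 %| c j - r j)%Z.
  move=> i; rewrite /r {1}(divz_eq (c i) 4) addrK; exact: dvdz_mull (dvdzz 4).
have hr : forall e, (e < 8)%N -> (4 %| negcorr r e)%Z.
  move=> e he; have h4 := @negcorr_mod4 c r e hcr.
  have -> : negcorr r e = negcorr c e - (negcorr c e - negcorr r e) by ring.
  exact: rpredB (hc e he) h4.
have rin : forall i, r i \in [:: 0; 1; 2; 3].
  move=> i; have h0 : 0 <= r i by rewrite /r modz_ge0.
  have h1 : r i < 4 by rewrite /r ltz_pmod.
  have : r i = 0 \/ r i = 1 \/ r i = 2 \/ r i = 3 by lia.
  by case=> [->|[->|[->|->]]].
pose l := [seq r i | i <- iota 0 8].
have hl : forall i, (i < 8)%N -> nth 0 l i = r i.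
  by move=> i hi; rewrite (nth_map 0%N) ?size_iota // nth_iota.
have lmem : l \in lists 8.
  have -> : 8%N = size l by rewrite size_map size_iota.
  apply: lists_mem; apply/allP => x /mapP[i _ ->]; exact: rin.
have := allP check l lmem; rewrite /cond => /orP[/negP []|].
  apply/allP => e; rewrite mem_iota /= add0n => he.
  rewrite (@negcorr_ext (fun j => nth 0 l j) r e); last by move=> i hi; rewrite hl.
  apply/eqP/dvdz_mod0P; exact: hr.
move/allP/(_ j); rewrite mem_iota add0n hj hl // => /(_ isT) /eqP /dvdz_mod0P h2.
rewrite (divz_eq (c j) 4) -/(r j); apply: rpredD => //.
by apply: dvdz_mull; rewrite (_ : 4 = 2 * 2) // dvdz_mull.
Qed.

Lemma core m : forall c : nat -> int,
  (forall e, (e < 8)%N -> negcorr c e = (if e == 0%N then - 2 ^+ m else 0)) ->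
  forall j, (j < 8)%N -> c j = 0 \/ c j = 2 ^+ m./2 \/ c j = - 2 ^+ m./2.
Proof.
elim/ltn_ind: m => m IH c hc j hj.
have sq : \sum_(0 <= i < 8) c i ^+ 2 = 2 ^+ m.
  by apply: oppr_inj; rewrite -negcorr0 hc.
have le : c j ^+ 2 <= 2 ^+ m.
  rewrite -sq (bigD1_seq j) /=; last by [].
    by rewrite lerDl; apply: sumr_ge0 => i _; exact: sqr_ge0.
  by rewrite mem_index_iota.
case: m IH hc sq le => [|[|m]] IH hc sq le.
- rewrite /= expr0 expr2 in le *.
  have h1 : c j <= 1 by nia. have h2 : -1 <= c j by nia. lia.
- rewrite /= expr0 expr1 expr2 in le *.
  have h1 : c j <= 1 by nia. have h2 : -1 <= c j by nia. lia.
have h4 : forall e, (e < 8)%N -> (4 %| negcorr c e)%Z.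
  move=> e he; rewrite hc //; case: eqP => _; last exact: dvdz0.
  rewrite rpredN !exprS mulrA; apply: dvdz_mulr; exact: dvdzz.
have ev := @even_of_4 c h4.
pose c' i := (c i %/ 2)%Z.
have hcc : forall i, (i < 8)%N -> c i = 2 * c' i.
  by move=> i hi; rewrite /c' mulrC divzK // ev.
have hc' : forall e, (e < 8)%N -> negcorr c' e = (if e == 0%N then - 2 ^+ m else 0).
  move=> e he; apply: (@mulfI _ 4) => //.
  rewrite -negcorr_scale -(@negcorr_ext c) // hc //.
  by case: eqP => _; rewrite ?mulr0 // !exprS; ring.
have := IH m (leqnSn m.+1) c' hc' j hj.
rewrite hcc // /= exprS.
by case=> [->|[->|->]]; [left; rewrite mulr0 | right; left | right; right; rewrite mulrN].
Qed.

Lemma z8 : zeta16 ^+ 8 = -1.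
Proof. by rewrite /zeta16 rootCK. Qed.

Lemma z16 : zeta16 ^+ 16 = 1.
Proof. by rewrite (_ : 16 = 8 * 2)%N // exprM z8 expr2 mulrN1 opprK. Qed.

Lemma zprim : 16.-primitive_root zeta16.
Proof.
have [m pm dm] := prim_order_exists (isT : (0 < 16)%N) z16.
have n8 : ~~ (m %| 8)%N.
  rewrite (prim_order_dvd pm) z8; apply/negP => /eqP h.
  have : (2 : algC) == 0 by rewrite -[2]/(1 + 1) -{1}h addNr.
  by rewrite pnatr_eq0.
have le : (m <= 16)%N by apply: dvdn_leq.
have : all (fun i => (i %| 16)%N ==> ~~ (i %| 8)%N ==> (i == 16)) (iota 0 17) by [].
move/allP/(_ m); rewrite mem_iota ltnS le dm n8 => /(_ isT) /eqP hm.
by move: pm; rewrite hm.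
Qed.

Lemma size_minz : size (minCpoly zeta16) = 9%N.
Proof. by rewrite (minCpoly_cyclotomic zprim) size_cyclotomic. Qed.

Lemma zindep (b : nat -> int) :
  \sum_(0 <= e < 8) (b e)%:~R * zeta16 ^+ e = 0 -> forall e, (e < 8)%N -> b e = 0.
Proof.
move=> h e he.
pose q : {poly rat} := \poly_(i < 8) (b i)%:~R.
have [p [Dp _] dv] := minCpolyP zeta16.
have rq : root (map_poly ratr q) zeta16.
  rewrite /root /q poly_def rmorph_sum horner_sum; apply/eqP.
  rewrite -[in RHS]h big_mkord; apply: eq_bigr => i _.
  by rewrite /= map_polyZ map_polyXn hornerZ hornerXn rmorph_int.
have q0 : q = 0.
  apply/eqP; apply: contraT => nq.
  have := dvdp_leq nq (etrans (esym (dv q)) rq).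
  have -> : size p = 9%N by rewrite -size_minz Dp size_map_poly.
  by move/leq_trans/(_ (size_poly _ _)).
have := congr1 (fun r : {poly rat} => r`_e) q0.
by rewrite coef_poly he coef0 => /eqP; rewrite intr_eq0 => /eqP.
Qed.

Lemma znorm : `|zeta16| = 1.
Proof.
apply/eqP; rewrite -(@pexpr_eq1 _ _ 16) // -normrX z16 normr1 //.
Qed.

Lemma zconjX k : (k <= 8)%N -> (zeta16^*) ^+ k = - zeta16 ^+ (8 - k).
Proof.
move=> hk.
have h1 : zeta16 * zeta16^* = 1 by rewrite -normCK znorm expr1n.
have h2 : zeta16 ^+ k * (zeta16^*) ^+ k = 1 by rewrite -exprMn h1 expr1n.
have h3 : zeta16 ^+ (8 - k) * zeta16 ^+ k = -1 by rewrite -exprD subnK // z8.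
rewrite -[LHS]mul1r -[1]opprK -h3 mulNr -mulrA h2 mulr1.
by [].
Qed.

Definition Hz (c : nat -> int) : algC := \sum_(0 <= k < 8) (c k)%:~R * zeta16 ^+ k.

Lemma sum_ind8 (F : nat -> algC) x : (x < 8)%N ->
  \sum_(0 <= e < 8) (if x == e then F e else 0) = F x.
Proof.
move=> hx; rewrite (bigD1_seq x) /= ?mem_index_iota //.
rewrite eqxx big1_seq ?addr0 // => e /andP[ne _]; by rewrite eq_sym (negbTE ne).
Qed.

Lemma zexp j k : (k < 8)%N -> (j < 8)%N ->
  zeta16 ^+ j * zeta16 ^+ (8 - k) = (if (j < k)%N then 1 else -1) * zeta16 ^+ ((j + 8 - k) %% 8).
Proof.
move=> hk hj; rewrite -exprD addnBA; last by apply: ltnW.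
case: ltnP => h.
  by rewrite modn_small ?mul1r //; lia.
have E : (j + 8 - k = 8 + (j + 8 - k) %% 8)%N by lia.
by rewrite {1}E exprD z8.
Qed.

Lemma HHconj c : Hz c * (Hz c)^* = - \sum_(0 <= e < 8) (negcorr c e)%:~R * zeta16 ^+ e.
Proof.
rewrite /Hz rmorph_sum mulr_suml.
transitivity (- \sum_(0 <= j < 8) \sum_(0 <= k < 8) (sgc c j k)%:~R * zeta16 ^+ ((j + 8 - k) %% 8)).
  rewrite -sumrN; apply: eq_big_nat => j /andP[_ hj]; rewrite mulr_sumr -sumrN.
  apply: eq_big_nat => k /andP[_ hk].
  rewrite rmorphM /= rmorph_int rmorphXn zconjX; last by apply: ltnW.
  have -> : (c j)%:~R * zeta16 ^+ j * ((c k)%:~R * - zeta16 ^+ (8 - k)) =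
     - ((c j)%:~R * (c k)%:~R * (zeta16 ^+ j * zeta16 ^+ (8 - k))) :> algC by ring.
  by rewrite zexp // /sgc; case: ifP => _; rewrite ?intrN intrM; ring.
congr (- _).
transitivity (\sum_(0 <= e < 8) (negcorr64 c e)%:~R * zeta16 ^+ e); last first.
  by apply: eq_big_nat => e /andP[_ he]; rewrite negcorr64E.
rewrite /negcorr64.
under [RHS]eq_bigr do rewrite rmorph_sum mulr_suml.
rewrite [RHS]exchange_big; apply: eq_bigr => j _.
under [RHS]eq_bigr do rewrite rmorph_sum mulr_suml.
rewrite [RHS]exchange_big; apply: eq_big_nat => k /andP[_ hk].
rewrite -(@sum_ind8 (fun e => (sgc c j k)%:~R * zeta16 ^+ e)) ?ltn_mod //.
by apply: eq_bigr => e _; case: eqP => _; rewrite ?mul0r.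
Qed.

Set Implicit Arguments. Unset Strict Implicit. Unset Printing Implicit Defensive.

Lemma ord3_cases (i : 'I_3) : i = ord3_0 \/ i = ord3_1 \/ i = ord3_2.
Proof.
case: i => [[|[|[|k]]] hi]; [left|right;left|right;right|]; try by apply: val_inj.
by [].
Qed.

Lemma dot3 (p y : bvec 3) :
  dotb p y = (p ord3_0 && y ord3_0) (+) (p ord3_1 && y ord3_1) (+) (p ord3_2 && y ord3_2).
Proof.
rewrite /dotb !big_ord_recl big_ord0 addbF.
have -> : lift ord0 (lift ord0 ord0) = ord3_2 :> 'I_3 by apply: val_inj.
have -> : lift ord0 ord0 = ord3_1 :> 'I_3 by apply: val_inj.
have -> : (ord0 : 'I_3) = ord3_0 by apply: val_inj.
by rewrite addbA.
Qed.

Definition flip m (i : 'I_m) (y : bvec m) : bvec m := [ffun k => y k (+) (k == i)].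

Lemma flipK m i : involutive (@flip m i).
Proof. by move=> y; apply/ffunP => k; rewrite !ffunE -addbA addbb addbF. Qed.

Lemma dot_flip m (p y : bvec m) i : dotb p (flip i y) = dotb p y (+) p i.
Proof.
rewrite /dotb.
under eq_bigr do rewrite ffunE andb_addr.
rewrite big_split /=; congr addb.
rewrite (bigD1 i) //= eqxx andbT big1 ?addbF // => k nk.
by rewrite (negbTE nk) andbF.
Qed.

Lemma sgnC_addb a b : sgnC (a (+) b) = sgnC a * sgnC b.
Proof. by rewrite /sgnC signr_addb. Qed.

Lemma orth3 (p : bvec 3) :
  \sum_(y : bvec 3) sgnC (dotb p y) = if [forall i, ~~ p i] then 8 else 0.
Proof.
case: ifP => [/forallP h | /negbT /forallPn [i /negPn pi]].
  rewrite (eq_bigr (fun _ => 1)); last first.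
    move=> y _; rewrite /dotb big1 // => k _; by rewrite (negbTE (h k)).
  by rewrite sumr_const card_ffun card_bool card_ord.
set S := \sum_(y : bvec 3) _.
have hS : S = - S.
  rewrite {1}/S (reindex_inj (inv_inj (@flipK 3 i))) /= -sumrN.
  by apply: eq_bigr => y _; rewrite dot_flip pi sgnC_addb /sgnC expr1 mulrN1.
have : S *+ 2 = 0 by rewrite mulr2n {1}hS addNr.
by move/eqP; rewrite -mulr_natr mulf_eq0 pnatr_eq0 orbF => /eqP.
Qed.

Definition join n (x : bvec n) (y : bvec 3) : bvec (n + 3) :=
  [ffun i => match split i with inl a => x a | inr b => y b end].

Lemma joinL n x y (i : 'I_n) : join x y (lshift 3 i) = x i.
Proof. by rewrite ffunE (unsplitK (inl _ i)). Qed.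

Lemma joinR n x y (j : 'I_3) : join x y (rshift n j) = y j.
Proof. by rewrite ffunE (unsplitK (inr _ j)). Qed.

Definition yvec n (z : bvec (n + 3)) : bvec 3 := [ffun j => ypart z j].

Lemma xpart_join n x y : xpart (@join n x y) = x.
Proof. by apply/ffunP => i; rewrite ffunE joinL. Qed.

Lemma ypart_join n x y j : ypart (@join n x y) j = y j.
Proof. by rewrite /ypart joinR. Qed.

Lemma join_part n z : join (@xpart n z) (yvec z) = z.
Proof.
apply/ffunP => i; rewrite ffunE.
rewrite -[in RHS](splitK i); case: (split i) => a /=; by rewrite ffunE.
Qed.

Lemma sum_join n (F : bvec (n + 3) -> algC) :
  \sum_z F z = \sum_(x : bvec n) \sum_(y : bvec 3) F (join x y).
Proof.
rewrite pair_big /=.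
rewrite (reindex (fun p : bvec n * bvec 3 => join p.1 p.2)) //.
exists (fun z => (xpart z, yvec z)) => [[x y] _ | z _] /=.
  congr pair; first exact: xpart_join.
  by apply/ffunP => j; rewrite ffunE ypart_join.
exact: join_part.
Qed.

Lemma dot_join n (w : bvec (n + 3)) x y :
  dotb w (join x y) = dotb (xpart w) x (+) dotb (yvec w) y.
Proof.
rewrite /dotb big_split_ord; congr addb; apply: eq_bigr => i _.
  by rewrite joinL ffunE.
by rewrite joinR ffunE.
Qed.

Definition idx n (a1 a2 a3 : bvec n -> bool) x := (a1 x + 2 * a2 x + 4 * a3 x)%N.

Definition cc n (a1 a2 a3 a4 : bvec n -> bool) (u : bvec n) (k : nat) : int :=
  \sum_(x : bvec n) (if idx a1 a2 a3 x == k then (-1) ^+ (a4 x (+) dotb u x) else 0).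

Lemma idx_lt8 n a1 a2 a3 x : (@idx n a1 a2 a3 x < 8)%N.
Proof. by rewrite /idx; case: (a1 x); case: (a2 x); case: (a3 x). Qed.

Lemma gwalshE n a1 a2 a3 a4 u :
  gwalsh16 (f16 a1 a2 a3 a4) u = Hz (@cc n a1 a2 a3 a4 u).
Proof.
rewrite /Hz /cc.
under [RHS]eq_bigr do rewrite rmorph_sum mulr_suml.
rewrite [RHS]exchange_big /gwalsh16; apply: eq_bigr => x _.
have -> : zeta16 ^+ f16 a1 a2 a3 a4 x * sgnC (dotb u x) =
   sgnC (a4 x (+) dotb u x) * zeta16 ^+ (idx a1 a2 a3 x).
  rewrite /f16 exprD exprM z8 sgnC_addb /sgnC /idx; ring.
rewrite -(@sum_ind8 (fun k => sgnC (a4 x (+) dotb u x) * zeta16 ^+ k)) ?idx_lt8 //.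
apply: eq_bigr => k _; case: eqP => _; rewrite ?mul0r //.
by rewrite rmorph_sign.
Qed.

Definition vidx n (w : bvec (n + 3)) :=
  (ypart w ord3_0 + 2 * ypart w ord3_1 + 4 * ypart w ord3_2)%N.

Lemma forall3 (q : pred 'I_3) : [forall i, q i] = [&& q ord3_0, q ord3_1 & q ord3_2].
Proof.
apply/forallP/and3P => [h | [h0 h1 h2] i]; first by split; apply: h.
by case: (ord3_cases i) => [->|[->|->]].
Qed.

Lemma walshE n a1 a2 a3 a4 w :
  walsh (gray a1 a2 a3 a4) w = 8 * (@cc n a1 a2 a3 a4 (xpart w) (vidx w))%:~R.
Proof.
rewrite /walsh sum_join /cc rmorph_sum mulr_sumr; apply: eq_bigr => x _.
set u := xpart w.
pose p : bvec 3 := [ffun j => (if j == ord3_0 then a1 x else if j == ord3_1 then a2 x else a3 x)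
   (+) ypart w j].
have n10 : (ord3_1 == ord3_0) = false by [].
have n20 : (ord3_2 == ord3_0) = false by [].
have n21 : (ord3_2 == ord3_1) = false by [].
transitivity (\sum_(y : bvec 3) sgnC (a4 x (+) dotb u x) * sgnC (dotb p y)).
  apply: eq_bigr => y _; rewrite -sgnC_addb; congr sgnC.
  rewrite /gray xpart_join !ypart_join dot_join !dot3 /p !ffunE /= -/u.
  move: (y ord3_0) (y ord3_1) (y ord3_2) (a1 x) (a2 x) (a3 x) (a4 x) (dotb u x).
  move: (ypart w ord3_0) (ypart w ord3_1) (ypart w ord3_2).
  by do 11!case.
rewrite -mulr_sumr orth3 forall3 /p !ffunE /= /idx /vidx.
move: (a1 x) (a2 x) (a3 x) (ypart w ord3_0) (ypart w ord3_1) (ypart w ord3_2) => b1 b2 b3 v1 v2 v3.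
have -> : [&& ~~ (b1 (+) v1), ~~ (b2 (+) v2) & ~~ (b3 (+) v3)] =
    ((b1 + 2 * b2 + 4 * b3)%N == (v1 + 2 * v2 + 4 * v3)%N).
  by move: b1 b2 b3 v1 v2 v3; do 6!case.
case: ifP => _ /=; last by rewrite mulr0 rmorph0 mulr0.
by rewrite rmorph_sign /sgnC mulrC.
Qed.

Lemma key n a1 a2 a3 a4 : gbent16 (f16 a1 a2 a3 a4) ->
  forall u k, (k < 8)%N ->
  let v := @cc n a1 a2 a3 a4 u k in v = 0 \/ v = 2 ^+ n./2 \/ v = - 2 ^+ n./2.
Proof.
move=> hb u k hk /=; apply: core => //.
set c := cc a1 a2 a3 a4 u.
have h2 : Hz c * (Hz c)^* = 2%:R ^+ n by rewrite -normCK -gwalshE hb sqrtCK.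
rewrite HHconj in h2.
pose b e := negcorr c e + (if (0 == e)%N then 2 ^+ n else 0).
have hb0 : \sum_(0 <= e < 8) (b e)%:~R * zeta16 ^+ e = 0.
  rewrite /b.
  under eq_bigr do rewrite intrD mulrDl.
  rewrite big_split /= -[X in X + _]opprK h2.
  rewrite (eq_bigr (fun e => if (0 == e)%N then (2 ^+ n : int)%:~R * zeta16 ^+ e else 0)).
    by rewrite sum_ind8 // expr0 mulr1 rmorphXn /= addNr.
  by move=> e _; case: eqP => _; rewrite ?mul0r.
move=> e he; have := @zindep b hb0 e he; rewrite /b eq_sym.
by case: eqP => _; [move/eqP; rewrite addr_eq0 => /eqP | rewrite addr0].
Qed.

Lemma sqrt2 m : sqrtC (2%:R ^+ (m.*2)) = 2%:R ^+ m :> algC.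
Proof. by rewrite -muln2 exprM sqrCK // exprn_ge0 // ler0n. Qed.

Lemma normval k (v : int) : v = 0 \/ v = 2 ^+ k \/ v = - 2 ^+ k ->
  `|8 * v%:~R : algC| = 0 \/ `|8 * v%:~R : algC| = 2%:R ^+ (k + 3).
Proof.
have E : `|8 * (2 ^+ k : int)%:~R : algC| = 2%:R ^+ (k + 3).
  rewrite rmorphXn /= exprD mulrC normrM normrX.
  by rewrite -[2%:~R]/(2%:R : algC) !normr_nat -!natrX.
case=> [->|[->|->]]; [left; by rewrite mulr0 normr0 | right | right] => //.
by rewrite rmorphN mulrN normrN.
Qed.

Local Close Scope ring_scope.

Theorem mainTheorem12 (n : nat) (a1 a2 a3 a4 : bvec n -> bool) :
  gbent16 (f16 a1 a2 a3 a4) ->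
  (odd n -> semibent (gray a1 a2 a3 a4)) /\
  (~~ odd n -> plateaued 3 (gray a1 a2 a3 a4)).
Proof.
move=> hb.
have gen : forall s, (n + 3 + s = (n./2 + 3).*2)%N -> plateaued s (gray a1 a2 a3 a4).
  move=> s hs w; rewrite walshE hs sqrt2.
  have hk : (vidx w < 8)%N.
    by rewrite /vidx; case: (ypart w ord3_0); case: (ypart w ord3_1); case: (ypart w ord3_2).
  exact: normval (key hb (xpart w) hk).
have E := odd_double_half n.
split.
  move=> ho; rewrite /semibent oddD ho /=; apply: gen.
  rewrite ho /= in E; rewrite -!muln2 in E *; lia.
move=> ho; apply: gen.
rewrite (negbTE ho) /= in E; rewrite -!muln2 in E *; lia.
Qed.
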